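(* Let $A,B \in M_n(\mathbb{R}_+)$ be two triangularizable matrices. Then $A$ and $B$ are simultaneously triangularizable if and only if the union $G_A \cup G_B$ of their digraphs has no directed multi-vertex cycles.
   Context: Max algebra: $\mathbb{R}_+$ the nonnegative reals with $a\oplus b=\max\{a,b\}$ and ordinary multiplication. For $A,B\in M_n(\mathbb{R}_+)$, $(AB)_{ij}=\max_k a_{ik}b_{kj}$ and $(A\oplus B)_{ij}=\max\{a_{ij},b_{ij}\}$. $GL_n(\mathbb{R}_+)$ is the set of matrices invertible under this product (the generalized permutation matrices). $A$ is triangularizable if $P^{-1}AP$ is upper triangular for some $P\in GL_n(\mathbb{R}_+)$; $A,B$ are simultaneously triangularizable if there is one $P\in GL_n(\mathbb{R}_+)$ with both $P^{-1}AP$ and $P^{-1}BP$ upper triangular. The digraph $G_A$ has vertices $\{1,\dots,n\}$ and an edge $i\to j$ iff $a_{ij}>0$; $G_A\cup G_B$ has vertices $\{1,\dots,n\}$ and the union of the edge sets (it equals $G_{A\oplus B}$). A directed multi-vertex cycle is a directed simple cycle through at least two distinct vertices. *)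

(* Defs.v *)
From mathcomp Require Import all_boot all_order all_algebra.
Set Implicit Arguments. Unset Strict Implicit. Unset Printing Implicit Defensive.
Import Order.TTheory GRing.Theory Num.Theory.
Local Open Scope ring_scope.

Section MaxAlgebra.
Variables (R : realFieldType) (n : nat).

Definition nonneg_mx (A : 'M[R]_n) : Prop := forall i j, 0 <= A i j.

(* max-times product: (AB)_ij = max_k a_ik b_kj  (0 is the neutral element of
   max on R_+) *)
Definition maxmul (A B : 'M[R]_n) : 'M[R]_n :=
  \matrix_(i, j) \big[Num.max/0]_(k < n) (A i k * B k j).

Definition maxid : 'M[R]_n := 1%:M.

Definition maxGL (P : 'M[R]_n) : Prop :=
  nonneg_mx P /\ exists Q : 'M[R]_n,
    nonneg_mx Q /\ maxmul P Q = maxid /\ maxmul Q P = maxid.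

Definition upper_tri (A : 'M[R]_n) : Prop := forall i j : 'I_n, (j < i)%N -> A i j = 0.

Definition maxinv (P Q : 'M[R]_n) : Prop :=
  nonneg_mx P /\ nonneg_mx Q /\ maxmul P Q = maxid /\ maxmul Q P = maxid.

Definition triangularizable (A : 'M[R]_n) : Prop :=
  exists P Q, maxinv P Q /\ upper_tri (maxmul (maxmul Q A) P).

Definition simul_triangularizable (A B : 'M[R]_n) : Prop :=
  exists P Q, maxinv P Q /\ upper_tri (maxmul (maxmul Q A) P)
                         /\ upper_tri (maxmul (maxmul Q B) P).

Definition digraph (A : 'M[R]_n) : rel 'I_n := fun i j => 0 < A i j.

Definition digraph_union (A B : 'M[R]_n) : rel 'I_n :=
  fun i j => digraph A i j || digraph B i j.

Definition has_multivertex_cycle (e : rel 'I_n) : Prop :=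
  exists c : seq 'I_n, (2 <= size c)%N /\ cycle e c /\ uniq c.

End MaxAlgebra.

(* Main.v *)
Require Import Defs.
From mathcomp Require Import all_boot all_order all_algebra.
From mathcomp Require Import zify.
Set Implicit Arguments. Unset Strict Implicit. Unset Printing Implicit Defensive.
Import Order.TTheory GRing.Theory Num.Theory.

Section Aux.
Local Open Scope ring_scope.
Variables (R : realFieldType) (n : nat).

Lemma bmax_ge_seq (I : eqType) (r : seq I) (F : I -> R) x :
  x \in r -> F x <= \big[Num.max/0]_(k <- r) F k.
Proof.
elim: r => //= a r IH; rewrite inE big_cons => /orP[/eqP->|/IH h].
  by rewrite le_max lexx.
by rewrite le_max h orbT.
Qed.

Lemma bmax_ge (F : 'I_n -> R) k : F k <= \big[Num.max/0]_(l < n) F l.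
Proof. exact/bmax_ge_seq/mem_index_enum. Qed.

Lemma bmax_le (F : 'I_n -> R) c :
  0 <= c -> (forall k, F k <= c) -> \big[Num.max/0]_(l < n) F l <= c.
Proof.
move=> c0 H; apply: (big_ind (fun x => x <= c)) => // x y hx hy.
by rewrite ge_max hx hy.
Qed.

Lemma bmax_gt0 (F : 'I_n -> R) :
  0 < \big[Num.max/0]_(l < n) F l -> exists k, 0 < F k.
Proof.
move=> hpos; case: (pickP (fun k => 0 < F k)) => [k hk|H]; first by exists k.
have : \big[Num.max/0]_(l < n) F l <= 0.
  by apply: bmax_le => // k; have := H k; rewrite /= ltNge => /negbFE.
by rewrite leNgt hpos.
Qed.

Lemma bmax_single (F : 'I_n -> R) k0 :
  0 <= F k0 -> (forall k, k != k0 -> F k = 0) ->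
  \big[Num.max/0]_(l < n) F l = F k0.
Proof.
move=> h0 H; apply/le_anti; rewrite bmax_ge andbT.
apply: bmax_le => // k; case: (eqVneq k k0) => [->|/H ->] //.
Qed.

Lemma bmax_zero (F : 'I_n -> R) :
  (forall k, F k = 0) -> \big[Num.max/0]_(l < n) F l = 0.
Proof.
move=> H; apply: (big_ind (fun x => x = 0)) => // x y -> ->.
by rewrite maxxx.
Qed.

Lemma pos_mul_l (a b : R) : 0 <= a -> 0 <= b -> 0 < a * b -> 0 < a.
Proof.
move=> ha hb; rewrite (lt0r a) ha andbT; apply: contraTneq => ->.
by rewrite mul0r ltxx.
Qed.

Lemma pos_mul_r (a b : R) : 0 <= a -> 0 <= b -> 0 < a * b -> 0 < b.
Proof. by move=> ha hb; rewrite mulrC; apply: pos_mul_l. Qed.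

Lemma maxmulE (A B : 'M[R]_n) i j :
  maxmul A B i j = \big[Num.max/0]_(k < n) (A i k * B k j).
Proof. by rewrite /maxmul mxE. Qed.

Lemma maxidE i j : (maxid R n) i j = (i == j)%:R.
Proof. by rewrite /maxid mxE. Qed.

End Aux.

Section Fwd.
Local Open Scope ring_scope.
Variables (R : realFieldType) (n : nat) (A B P Q : 'M[R]_n).
Hypotheses (nnA : nonneg_mx A) (nnB : nonneg_mx B) (hinv : maxinv P Q).

Lemma id_pos (X Y : 'M[R]_n) i l j :
  maxmul X Y = maxid R n -> 0 < X i l -> 0 < Y l j -> i = j.
Proof.
move=> H hx hy; have h : maxmul X Y i j = maxid R n i j by rewrite H.
move: h; rewrite maxmulE maxidE; case: (eqVneq i j) => // _ h.
have := bmax_ge (fun k => X i k * Y k j) l; rewrite h /=.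
by rewrite leNgt mulr_gt0.
Qed.

Let nnP : nonneg_mx P. Proof. by case: hinv. Qed.
Let nnQ : nonneg_mx Q. Proof. by case: hinv => _ []. Qed.
Let HPQ : maxmul P Q = maxid R n. Proof. by case: hinv => _ [] _ []. Qed.
Let HQP : maxmul Q P = maxid R n. Proof. by case: hinv => _ [] _ []. Qed.

Lemma exP k : exists m, 0 < P k m /\ 0 < Q m k.
Proof.
have h : maxmul P Q k k = maxid R n k k by rewrite HPQ.
move: h; rewrite maxmulE maxidE eqxx.
move=> h; have : 0 < \big[Num.max/0]_(l < n) (P k l * Q l k) by rewrite h ltr01.
case/bmax_gt0 => m hm; exists m; split.
  exact: (pos_mul_l (nnP _ _) (nnQ _ _) hm).
exact: (pos_mul_r (nnP _ _) (nnQ _ _) hm).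
Qed.

Definition fq (k : 'I_n) : 'I_n := odflt k [pick m | 0 < Q m k].

Lemma hf k : 0 < Q (fq k) k.
Proof.
rewrite /fq; case: pickP => [m //|H].
by have [m [_ hq]] := exP k; rewrite H in hq.
Qed.

Lemma fq_P l m : 0 < P l m -> m = fq l.
Proof. by move=> hp; rewrite (id_pos HQP (hf l) hp). Qed.

Lemma fq_inj k l : fq k = fq l -> k = l.
Proof.
move=> e; have [m [hp _]] := exP k; have em := fq_P hp.
rewrite em e in hp; exact: (id_pos HPQ hp (hf l)).
Qed.

Lemma edge_le (X : 'M[R]_n) k l : nonneg_mx X ->
  upper_tri (maxmul (maxmul Q X) P) -> 0 < X k l -> (fq k <= fq l)%N.
Proof.
move=> nnX hup hx; rewrite leqNgt; apply/negP => lt.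
have := hup _ _ lt; apply/eqP; rewrite gt_eqF //.
have [m [hp _]] := exP l; have em := fq_P hp.
rewrite maxmulE; apply: lt_le_trans (bmax_ge _ l); rewrite em in hp.
apply: mulr_gt0 => //; rewrite maxmulE; apply: lt_le_trans (bmax_ge _ k).
by apply: mulr_gt0 => //; apply: hf.
Qed.

Lemma fwd : upper_tri (maxmul (maxmul Q A) P) -> upper_tri (maxmul (maxmul Q B) P) ->
  ~ has_multivertex_cycle (digraph_union A B).
Proof.
move=> hA hB [[|x [|y s]] [//= _ [hc hu]]].
have sub : subrel (digraph_union A B) (fun a b => (fq a <= fq b)%N).
  move=> a b /orP[]; [exact: edge_le nnA hA | exact: edge_le nnB hB].
move: hc; rewrite /cycle /= => /andP[exy hp].
have tr : transitive (fun a b : 'I_n => (fq a <= fq b)%N).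
  by move=> b a c /= h1 h2; exact: leq_trans h1 h2.
have /(order_path_min tr) /allP /(_ x) : path (fun a b => (fq a <= fq b)%N) y (rcons s x).
  exact: (@sub_path _ (digraph_union A B) _ sub y (rcons s x) hp).
rewrite mem_rcons mem_head => /(_ isT) /= hyx.
have := sub _ _ exy => /= hxy.
have exy' : x = y by apply: fq_inj; apply: val_inj; apply/eqP; rewrite /= eqn_leq hxy hyx.
by move: hu; rewrite exy' mem_head.
Qed.
End Fwd.

Section Bwd.
Local Open Scope ring_scope.
Variables (R : realFieldType) (n : nat) (A B : 'M[R]_n).
Hypotheses (nnA : nonneg_mx A) (nnB : nonneg_mx B).
Hypothesis (Hnc : ~ has_multivertex_cycle (digraph_union A B)).

Definition e' : rel 'I_n := fun i j => digraph_union A B i j && (i != j).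

Lemma nocyc k l : e' k l -> ~~ connect e' l k.
Proof.
move=> ekl; apply/negP => /connectP [p hp hlast].
move: hlast; case: (shortenP hp) => p' hp' hu _ hlast.
apply: Hnc; exists (l :: p'); split; last split => //.
  case: p' hp' hu hlast => //= _ _ hkl; move: ekl; rewrite /e' hkl eqxx andbF //.
rewrite /cycle rcons_path -hlast.
have -> : path (digraph_union A B) l p'.
  by apply: (@sub_path _ e' _ _ l p' hp') => a b /andP[].
by move: ekl => /andP[].
Qed.

Definition rk (k : 'I_n) := #|[set j | connect e' j k]|.

Lemma rk_lt k l : e' k l -> (rk k < rk l)%N.
Proof.
move=> ekl; apply: proper_card; apply/properP; split.
  apply/subsetP => j; rewrite !inE => hj.
  by apply: connect_trans hj (connect1 ekl).
by exists l; rewrite !inE ?connect0 // (negbTE (nocyc ekl)).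
Qed.

Definition key (k : 'I_n) := (rk k * n + k)%N.

Lemma key_lt k l : e' k l -> (key k < key l)%N.
Proof.
move=> /rk_lt h; rewrite /key; have := ltn_ord k; have := ltn_ord l.
nia.
Qed.

Lemma key_inj k l : key k = key l -> k = l.
Proof.
move=> e; apply: val_inj => /=.
have := congr1 (modn^~ n) e; rewrite /key !modnMDl !modn_small //.
Qed.

Definition fo (k : 'I_n) := #|[set j | (key j < key k)%N]|.

Lemma fo_lt k : (fo k < n)%N.
Proof.
rewrite -[X in (_ < X)%N](card_ord n) -cardsT; apply: proper_card.
rewrite properEneq subsetT andbT; apply/eqP => /setP/(_ k).
by rewrite !inE ltnn.
Qed.

Lemma fo_mono k l : (key k < key l)%N -> (fo k < fo l)%N.
Proof.
move=> h; apply: proper_card; apply/properP; split.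
  by apply/subsetP => j; rewrite !inE => hj; exact: ltn_trans hj h.
by exists k; rewrite !inE ?ltnn.
Qed.

Definition F (k : 'I_n) : 'I_n := Ordinal (fo_lt k).

Lemma F_inj : injective F.
Proof.
move=> k l e; have e2 : fo k = fo l by have := congr1 val e.
case: (ltngtP (key k) (key l)) => [/fo_mono|/fo_mono|/key_inj] //; by rewrite e2 ltnn.
Qed.

Definition Pm : 'M[R]_n := \matrix_(l, j) ((F l == j)%:R).
Definition Qm : 'M[R]_n := \matrix_(i, k) ((F k == i)%:R).

Lemma natb_mul (b : bool) (c : R) : b%:R * c = if b then c else 0.
Proof. by case: b; rewrite ?mul1r ?mul0r. Qed.

Lemma inv_PQ : maxinv Pm Qm.
Proof.
split; first by move=> i j; rewrite mxE ler0n.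
split; first by move=> i j; rewrite mxE ler0n.
split; apply/matrixP => i j; rewrite maxmulE maxidE.
  rewrite (@bmax_single _ _ _ (F i)).
    by rewrite !mxE eqxx mul1r (inj_eq F_inj) eq_sym.
    by rewrite !mxE eqxx mul1r ler0n.
  by move=> k hk; rewrite !mxE natb_mul; case: eqP => // e; rewrite e eqxx in hk.
rewrite (@bmax_single _ _ _ (invF F_inj i)).
  by rewrite !mxE f_invF eqxx mul1r.
  by rewrite !mxE f_invF eqxx mul1r ler0n.
move=> k hk; rewrite !mxE natb_mul; case: eqP => // e; move: hk.
by rewrite -e invF_f eqxx.
Qed.

Lemma tri_X (X : 'M[R]_n) : nonneg_mx X ->
  (forall k l, 0 < X k l -> digraph_union A B k l) ->
  upper_tri (maxmul (maxmul Qm X) Pm).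
Proof.
move=> nnX hX i j lt; rewrite maxmulE; apply: bmax_zero => l.
rewrite !mxE mulrC natb_mul; case: eqP => // Flj.
apply: bmax_zero => k; rewrite !mxE natb_mul; case: eqP => // Fki.
apply/eqP; rewrite eq_le nnX andbT leNgt; apply/negP => pos.
have ekl : e' k l.
  rewrite /e' hX //=; apply/eqP => ekl; move: lt; rewrite -Flj -Fki ekl ltnn //.
have := fo_mono (key_lt ekl); move: lt; rewrite -Flj -Fki /=.
by move=> h1 h2; move: (ltn_trans h1 h2); rewrite ltnn.
Qed.

Lemma bwd : simul_triangularizable A B.
Proof.
exists Pm, Qm; split; first exact: inv_PQ.
split; apply: tri_X => // k l h; rewrite /digraph_union /digraph h ?orbT //.
Qed.

End Bwd.

Theorem theorem3p3 (R : realFieldType) (n : nat) (A B : 'M[R]_n) :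
  nonneg_mx A -> nonneg_mx B ->
  triangularizable A -> triangularizable B ->
  (simul_triangularizable A B <-> ~ has_multivertex_cycle (digraph_union A B)).
Proof.
move=> nnA nnB _ _; split.
  by case=> P [Q [hi [hA hB]]]; exact: fwd nnA nnB hi hA hB.
exact: bwd.
Qed.
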